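(* The transition function $F$, considered as an operator on the real Banach space $\mathcal M(\mathcal P(S))$ of signed Radon measures on $\mathcal P(S)$ with the total variation norm, is linear with operator norm $\|F\|=1$.
   Context: $T$ is an $n\times n$ stochastic matrix (transition matrix of a Markov chain on $S=\{1,\dots,n\}$); $O$ is a finite index set and for each $i\in O$, $M^{(i)}$ is an $n\times m$ stochastic matrix (observation matrix, observations in $V=\{1,\dots,m\}$). $\mathcal P(S)$ is the probability simplex in $\mathbb R^n$, $\delta(x)$ the point mass at $x\in S$. A (measurable) policy $g:\mathcal P(S)\to O$ has preimages $A_i=g^{-1}\{i\}$. $\alpha_{i,y}(z)=(zTM^{(i)})_y$ and, when $\alpha_{i,y}(z)>0$, $r_{i,y}(z)=\frac{\sum_{x,j}M^{(i)}_{x,y}T_{j,x}z_j\delta(x)}{\sum_{x,j}M^{(i)}_{x,y}T_{j,x}z_j}\in\mathcal P(S)$. The transition function is $F(\mu)=\sum_{i\in O}\sum_{y\in V}\int_{A_i}\alpha_{i,y}(z)\,\delta_{r_{i,y}(z)}\,d\mu(z)$ (terms with $\alpha_{i,y}(z)=0$ contribute zero), defined for signed Radon measures $\mu$ on $\mathcal P(S)$; it maps probability measures to probability measures. *)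

(* Defs.v *)
From HB Require Import structures.
From mathcomp Require Import all_boot all_order all_algebra.
From mathcomp Require Import all_classical all_reals all_analysis.
Set Implicit Arguments. Unset Strict Implicit. Unset Printing Implicit Defensive.
Import numFieldNormedType.Exports.
Import Order.TTheory GRing.Theory Num.Theory.
Local Open Scope classical_set_scope.
Local Open Scope ring_scope.

(* Row-stochastic matrix (rows indexed by the current state). *)
Definition stochastic (R : realType) (p q : nat) (A : 'M[R]_(p, q)) : Prop :=
  (forall i j, 0 <= A i j) /\ (forall i, \sum_j A i j = 1).

Definition simplex_pred (R : realType) (k : nat) (x : 'rV[R]_k) : bool :=
  [forall j, 0 <= x 0 j] && (\sum_j x 0 j == 1).

Definition simplex (R : realType) (k : nat) := {x : 'rV[R]_k | simplex_pred x}.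

Definition deltav (R : realType) (k : nat) (j : 'I_k) : 'rV[R]_k :=
  \row_l (l == j)%:R.

Lemma deltav_simplex (R : realType) (n : nat) : simplex_pred (deltav R (@ord0 n)).
Proof.
apply/andP; split.
  by apply/forallP => j; rewrite mxE ler0n.
rewrite (bigD1 ord0) //= big1 ?addr0; first by rewrite mxE eqxx.
by move=> j /negPf hj; rewrite mxE hj.
Qed.

Definition ssimplex (R : realType) (n : nat) : Type := simplex R n.+1.
HB.instance Definition _ (R : realType) (n : nat) := Choice.on (ssimplex R n).
HB.instance Definition _ (R : realType) (n : nat) :=
  isPointed.Build (ssimplex R n)
    (@exist _ (@simplex_pred R n.+1) _ (deltav_simplex R n)).

(* Borel sets of P(S) (subspace topology): sigma-algebra generated by the
   traces of the open sets of R^(n.+1). *)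
Definition simplex_open (R : realType) (n : nat) : set (set (ssimplex R n)) :=
  [set (@sval _ _) @^-1` U | U in [set U : set 'rV[R]_n.+1 | open U]].

Definition PS (R : realType) (n : nat) := g_sigma_algebraType (@simplex_open R n).

(* Signed integral w.r.t. a charge, via its Jordan decomposition
   (obtained from a Hahn decomposition; the result does not depend on it). *)
Section signed_integral.
Context d (X : measurableType d) (R : realType).

Definition cint (mu : {charge set X -> \bar R}) (D : set X) (f : X -> \bar R)
    : \bar R :=
  let PNp := cid (Hahn_decomposition mu) in
  let Np := cid (projT2 PNp) in
  (\int[jordan_pos (projT2 Np)]_(x in D) f x -
   \int[jordan_neg (projT2 Np)]_(x in D) f x)%E.

Definition tv_norm (nu : set X -> \bar R) : \bar R :=
  ereal_sup [set s : \bar R | exists (K : nat) (E : nat -> set X),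
     [/\ (forall k, measurable (E k)),
       trivIset [set k | (k < K)%N] E,
       \bigcup_(k in [set k | (k < K)%N]) E k = [set: X] &
       s = (\sum_(k < K) `|nu (E k)|)%E]].
End signed_integral.

Section transition.
Context (R : realType) (n m : nat) (O : finType).
Variables (T : 'M[R]_n.+1) (M : O -> 'M[R]_(n.+1, m)) (g : PS R n -> O).

Definition alpha (i : O) (y : 'I_m) (z : PS R n) : R :=
  ((sval z *m T *m M i) 0 y).

(* r_{i,y}(z) = (M^(i)_{x,y} (zT)_x)_x / alpha_{i,y}(z) (meaningful when
   alpha_{i,y}(z) > 0; elsewhere an irrelevant default value is used) *)
Definition rpost (i : O) (y : 'I_m) (z : PS R n) : PS R n :=
  @insubd _ _ (simplex R n.+1) z (\row_x (M i x y * (sval z *m T) 0 x / alpha i y z)).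

(* F(mu)(B) = sum_i sum_y int_{A_i} alpha_{i,y}(z) delta_{r_{i,y}(z)}(B) dmu(z),
   terms with alpha_{i,y}(z) = 0 contributing zero. *)
Definition Fop (mu : {charge set PS R n -> \bar R}) (B : set (PS R n)) : \bar R :=
  (\sum_(i : O) \sum_(y < m)
     cint mu (g @^-1` [set i] `&` [set z | (0 < alpha i y z)%R]
                `&` rpost i y @^-1` B) (fun z => (alpha i y z)%:E))%E.
End transition.

(* Main.v *)
Require Import Defs.
From HB Require Import structures.
From mathcomp Require Import all_boot all_order all_algebra.
From mathcomp Require Import all_classical all_reals all_analysis.
From mathcomp Require Import ring lra measurable_realfun.
Set Implicit Arguments. Unset Strict Implicit. Unset Printing Implicit Defensive.
Import numFieldNormedType.Exports.
Import Order.TTheory GRing.Theory Num.Theory.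
Local Open Scope classical_set_scope.
Local Open Scope ring_scope.


Section topo.
Context (R : realType).

Lemma continuous_bigsum (T : topologicalType) (I : Type) (s : seq I)
  (f : I -> T -> R) x : (forall i, {for x, continuous (f i)}) ->
  {for x, continuous (fun v => \sum_(i <- s) f i v)}.
Proof.
move=> H; elim: s => [|a s ih].
  have -> : (fun v => \sum_(i <- [::]) f i v) = cst 0.
    by apply/funext => v; rewrite big_nil.
  exact: cvg_cst.
have -> : (fun v => \sum_(i <- a :: s) f i v) = f a + (fun v => \sum_(i <- s) f i v).
  by apply/funext => v; rewrite big_cons.
exact: (@continuousD _ _ _ (f a) (fun v => \sum_(i <- s) f i v) x).
Qed.

Lemma row_continuous (T : topologicalType) k (f : T -> 'rV[R]_k) x :
  (forall j, {for x, continuous (fun v => f v 0 j)}) -> {for x, continuous f}.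
Proof.
move=> H A /= [P PN sub].
apply: (filterS (fun v Hv => sub (f v) Hv)).
apply: filter_forall => i; apply: filter_forall => j.
rewrite (ord1 i); exact: (H j _ (PN 0 j)).
Qed.
End topo.

Section meas.
Context (R : realType) (n m : nat) (O : finType).
Context (T : 'M[R]_n.+1) (M : O -> 'M[R]_(n.+1, m)) (g : PS R n -> O).
Context (hT : stochastic T) (hM : forall i, stochastic (M i)).

Definition alphar i y (v : 'rV[R]_n.+1) : R := (v *m T *m M i) 0 y.
Definition hrow i y (v : 'rV[R]_n.+1) : 'rV[R]_n.+1 :=
  \row_x (M i x y * (v *m T) 0 x / alphar i y v).

Lemma PS_meas_gen (U : set 'rV[R]_n.+1) : open U ->
  measurable ((@sval _ _ : PS R n -> _) @^-1` U).
Proof. by move=> oU; apply: sub_sigma_algebra; exists U. Qed.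

Lemma alpharE i y v : alphar i y v = \sum_j v 0 j * (T *m M i) j y.
Proof. by rewrite /alphar -mulmxA mxE. Qed.

Lemma alphar_cont i y : continuous (alphar i y).
Proof.
move=> x; have -> : alphar i y = fun v => \sum_(j <- index_enum 'I_n.+1) v 0 j * (T *m M i) j y.
  by apply/funext => v; rewrite alpharE.
apply: continuous_bigsum => j.
have H : {for x, continuous ((fun v : 'rV[R]_n.+1 => v 0 j) \* cst ((T *m M i) j y))}.
  by apply: continuousM; [exact: coord_continuous|exact: cst_continuous].
exact: H.
Qed.

Lemma PS_meas_real (h : 'rV[R]_n.+1 -> R) : continuous h ->
  measurable_fun setT (fun z : PS R n => h (sval z)).
Proof.
move=> ch; apply: (measurability _ (measurable_realfun.RGenOpens.measurableE R)).
move=> _ [_ [a [b ->]] <-]; rewrite setTI.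
apply: (PS_meas_gen (U := h @^-1` `]a, b[%classic)).
by move/continuousP: ch; apply; exact: interval_open.
Qed.

Lemma measurable_alpha i y : measurable_fun setT (alpha T M i y).
Proof. exact: (PS_meas_real (@alphar_cont i y)). Qed.

Lemma alphar_ge0 i y (v : 'rV[R]_n.+1) : (forall j, 0 <= v 0 j) -> 0 <= alphar i y v.
Proof.
move=> v0; rewrite alpharE; apply: sumr_ge0 => j _; apply: mulr_ge0 => //.
rewrite mxE; apply: sumr_ge0 => k _; apply: mulr_ge0; [exact: hT.1|exact: (hM i).1].
Qed.

Lemma sval_ge0 (z : PS R n) j : 0 <= sval z 0 j.
Proof. by have /andP[/forallP H _] := svalP z; exact: H. Qed.

Lemma sval_sum1 (z : PS R n) : \sum_j sval z 0 j = 1.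
Proof. by have /andP[_ /eqP H] := svalP z. Qed.

Lemma alpha_ge0 i y z : 0 <= alpha T M i y z.
Proof. exact: (alphar_ge0 i y (sval_ge0 z)). Qed.

Lemma hrow_simplex i y (v : 'rV[R]_n.+1) : (forall j, 0 <= v 0 j) ->
  0 < alphar i y v -> simplex_pred (hrow i y v).
Proof.
move=> v0 a0; apply/andP; split.
  apply/forallP => j; rewrite mxE; apply: divr_ge0; last exact: ltW.
  apply: mulr_ge0; first exact: (hM i).1.
  rewrite mxE; apply: sumr_ge0 => k _; apply: mulr_ge0 => //; exact: hT.1.
apply/eqP; under eq_bigr do rewrite mxE.
rewrite -mulr_suml.
have -> : \sum_j M i j y * (v *m T) 0 j = alphar i y v.
  by rewrite /alphar mxE; apply: eq_bigr => j _; rewrite mulrC.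
by rewrite mulfV // gt_eqF.
Qed.

Lemma rpost_val i y z : 0 < alpha T M i y z ->
  sval (rpost T M i y z) = hrow i y (sval z).
Proof.
move=> a0; rewrite /rpost insubdK //.
exact: (hrow_simplex (@sval_ge0 z) a0).
Qed.

Lemma lin_cont (c : 'I_n.+1 -> R) : continuous (fun v : 'rV[R]_n.+1 => \sum_k v 0 k * c k).
Proof.
move=> x; apply: continuous_bigsum => j.
have H : {for x, continuous ((fun v : 'rV[R]_n.+1 => v 0 j) \* cst (c j))}.
  by apply: continuousM; [exact: coord_continuous|exact: cst_continuous].
exact: H.
Qed.

Lemma hrow_cont i y v : alphar i y v != 0 -> {for v, continuous (hrow i y)}.
Proof.
move=> a0; apply: row_continuous => j.
have -> : (fun w => hrow i y w 0 j) = (cst (M i j y) \* (fun w : 'rV[R]_n.+1 => \sum_k w 0 k * T k j))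
   \* (fun w => (alphar i y w)^-1).
  by apply/funext => w; rewrite /hrow !mxE.
apply: continuousM; first apply: continuousM.
- exact: cst_continuous.
- exact: lin_cont.
- exact: (continuousV a0 (@alphar_cont i y v)).
Qed.

Lemma meas_pos i y : measurable [set z : PS R n | 0 < alpha T M i y z].
Proof.
rewrite (_ : [set z | _] = setT `&` alpha T M i y @^-1` `]0, +oo[%classic).
  exact: (@measurable_alpha i y measurableT _ (measurable_itv _)).
by apply/seteqP; split => z /=; rewrite ?in_itv /= andbT // => -[].
Qed.

Lemma meas_rpost_gen i y (U : set 'rV[R]_n.+1) : open U ->
  measurable ([set z : PS R n | 0 < alpha T M i y z] `&`
              rpost T M i y @^-1` ((@sval _ _ : PS R n -> _) @^-1` U)).
Proof.
move=> oU.
have -> : [set z : PS R n | 0 < alpha T M i y z] `&`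
              rpost T M i y @^-1` ((@sval _ _ : PS R n -> _) @^-1` U) =
  (@sval _ _ : PS R n -> _) @^-1` [set v | 0 < alphar i y v /\ U (hrow i y v)].
  apply/seteqP; split => z /=.
    by move=> [a0 Uz]; split => //; rewrite -rpost_val.
  by move=> [a0 Uz]; split => //; rewrite rpost_val.
apply: PS_meas_gen; rewrite openE => v /= [a0 Uh].
rewrite /interior; near=> w; split; near: w.
  exact: (@cvgr_gt _ _ _ _ (alphar i y) (alphar i y v) (@alphar_cont i y v) 0 a0).
by apply: (@hrow_cont i y v (lt0r_neq0 a0)); apply: open_nbhs_nbhs; split.
Unshelve. all: by end_near.
Qed.

Lemma meas_E i y B : (forall i, measurable (g @^-1` [set i])) -> measurable B ->
  measurable (g @^-1` [set i] `&` [set z | 0 < alpha T M i y z] `&` rpost T M i y @^-1` B).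
Proof.
move=> hg mB; rewrite -setIA; apply: measurableI => //.
have : measurable_fun [set z : PS R n | 0 < alpha T M i y z] (rpost T M i y).
  have hE : @measurable _ (PS R n) = <<s @simplex_open R n >>.
    reflexivity.
  have := @measurability _ _ (PS R n) (PS R n) [set z | 0 < alpha T M i y z] (rpost T M i y) (@simplex_open R n) hE.
  apply.
  move=> _ [_ [U oU <-] <-]; exact: meas_rpost_gen.
by move=> /(_ (meas_pos i y) B mB).
Qed.
End meas.


Section aux.
Context (R : realType).
Local Open Scope ereal_scope.

Lemma row_sum1 k l (v : 'rV[R]_k) (A : 'M[R]_(k, l)) : stochastic A ->
  (\sum_j v 0 j = 1 -> \sum_j (v *m A) 0 j = 1)%R.
Proof.
move=> [_ hA] hv; under eq_bigr do rewrite mxE.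
rewrite exchange_big /= -[RHS]hv; apply: eq_bigr => j _.
by rewrite -mulr_sumr hA mulr1.
Qed.

Lemma ssa_sum d (X : measurableType d) (I : Type) (s : seq I)
  (f : I -> set X -> \bar R) :
  (forall k B, 0 <= f k B) -> (forall k, semi_sigma_additive (f k)) ->
  semi_sigma_additive (fun B => \sum_(k <- s) f k B).
Proof.
move=> f0 hf; elim: s => [|a s ih] F mF tF mUF.
  have -> : (fun N => \sum_(0 <= j < N) (fun B => \sum_(k <- [::]) f k B) (F j)) = cst 0.
    by apply/funext => N; rewrite big1 // => j _; rewrite big_nil.
  rewrite big_nil; exact: cvg_cst.
have -> : (fun N => \sum_(0 <= j < N) (fun B => \sum_(k <- a :: s) f k B) (F j)) =
  (fun N => \sum_(0 <= j < N) f a (F j) + \sum_(0 <= j < N) (fun B => \sum_(k <- s) f k B) (F j)).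
  by apply/funext => N; rewrite -big_split; apply: eq_bigr => j _; rewrite big_cons.
rewrite big_cons; apply: cvgeD; last 2 first.
- exact: hf.
- exact: ih.
by apply: ge0_adde_def; rewrite inE; [exact: f0|apply: sume_ge0 => k _; exact: f0].
Qed.
End aux.

Section phi.
Context (R : realType) (n m : nat) (O : finType).
Context (T : 'M[R]_n.+1) (M : O -> 'M[R]_(n.+1, m)) (g : PS R n -> O).
Context (hT : stochastic T) (hM : forall i, stochastic (M i)).
Context (hg : forall i : O, measurable (g @^-1` [set i])).

Lemma alpha_sum1 i (z : PS R n) : \sum_y alpha T M i y z = 1.
Proof. exact: (row_sum1 (hM i) (row_sum1 hT (sval_sum1 z))). Qed.

Lemma alpha_le1 i y z : alpha T M i y z <= 1.
Proof.
rewrite -(alpha_sum1 i z) (bigD1 y) //= lerDl; apply: sumr_ge0 => k _.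
exact: alpha_ge0.
Qed.

Local Open Scope ereal_scope.

Definition Eset i y (B : set (PS R n)) :=
  g @^-1` [set i] `&` [set z | (0 < alpha T M i y z)%R] `&` rpost T M i y @^-1` B.

Definition piece (Q : {measure set PS R n -> \bar R}) i y B :=
  \int[Q]_(z in Eset i y B) (alpha T M i y z)%:E.

Lemma mEset i y B : measurable B -> measurable (Eset i y B).
Proof. exact: (meas_E hT hM i y hg). Qed.

Lemma malphaE i y (D : set (PS R n)) : measurable_fun D (fun z => (alpha T M i y z)%:E).
Proof.
apply/measurable_EFinP; apply: measurable_funTS; exact: measurable_alpha.
Qed.

Lemma piece_ge0 Q i y B : 0 <= piece Q i y B.
Proof. apply: integral_ge0 => z _; rewrite lee_fin; exact: alpha_ge0. Qed.

Lemma piece_le Q i y B : measurable B -> piece Q i y B <= Q setT.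
Proof.
move=> mB; apply: (@le_trans _ _ (\int[Q]_(z in Eset i y B) (cst 1 z))).
  apply: ge0_le_integral => //.
  - exact: mEset.
  - by move=> z _; rewrite lee_fin; exact: alpha_ge0.
  - exact: malphaE.
  - by move=> z _; rewrite lee_fin; exact: alpha_le1.
rewrite integral_cst ?mul1e; last exact: mEset.
by apply: le_measure => //; rewrite inE //; exact: mEset.
Qed.

Lemma piece0 Q i y : piece Q i y set0 = 0.
Proof. by rewrite /piece /Eset preimage_set0 setI0 integral_set0. Qed.

Lemma piece_sigma Q i y : semi_sigma_additive (piece Q i y).
Proof.
move=> F mF tF mUF.
have -> : piece Q i y (\bigcup_k F k) = \int[Q]_(z in \bigcup_k Eset i y (F k)) (alpha T M i y z)%:E.
  by rewrite /piece /Eset preimage_bigcup setI_bigcupr.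
have := @semi_sigma_additive_nng_induced _ _ R Q (fun z => (alpha T M i y z)%:E)
  (@malphaE i y setT) (fun z => alpha_ge0 hT hM i y z) (fun k => Eset i y (F k)).
apply.
- by move=> k; exact: mEset.
- apply/trivIsetP => j k _ _ jk; apply/seteqP; split => // z /= [[_ Fj] [_ Fk]].
  move/trivIsetP: tF => /(_ j k I I jk) h.
  by suff : (F j `&` F k) (rpost T M i y z) by rewrite h.
- by rewrite -setI_bigcupr -preimage_bigcup; exact: mEset.
Qed.

Definition Phi (Q : {measure set PS R n -> \bar R}) (B : set (PS R n)) : \bar R :=
  \sum_(i : O) \sum_(y < m) piece Q i y B.

Lemma piece_fin (Q : {finite_measure set PS R n -> \bar R}) i y B : measurable B ->
  piece Q i y B \is a fin_num.
Proof.
move=> mB; rewrite ge0_fin_numE ?piece_ge0 //.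
apply: (le_lt_trans (piece_le Q i y mB)); rewrite -ge0_fin_numE //.
exact: fin_num_measure.
Qed.

Lemma PhiE (Q : {finite_measure set PS R n -> \bar R}) B : measurable B ->
  Phi Q B = (\sum_(i : O) \sum_(y < m) fine (piece Q i y B))%:E.
Proof.
move=> mB; rewrite /Phi -sumEFin; apply: eq_bigr => i _.
rewrite -sumEFin; apply: eq_bigr => y _; rewrite fineK //; exact: piece_fin.
Qed.

Definition PhiM (_ : stochastic T) (_ : forall i, stochastic (M i))
  (_ : forall i : O, measurable (g @^-1` [set i]))
  (Q : {measure set PS R n -> \bar R}) := Phi Q.

Section phiQ.
Context (Q : {finite_measure set PS R n -> \bar R}).
Local Notation PQ := (PhiM hT hM hg Q).


Let Phi0 : PQ set0 = 0.
Proof. by rewrite /PhiM /Phi big1 // => i _; rewrite big1 // => y _; exact: piece0. Qed.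

Let Phi_ge0 B : 0 <= PQ B.
Proof. by apply: sume_ge0 => i _; apply: sume_ge0 => y _; exact: piece_ge0. Qed.

Let Phi_ssa : semi_sigma_additive (PQ).
Proof.
apply: (@ssa_sum _ _ _ _ _ (fun i B => \sum_(y < m) piece Q i y B)).
  by move=> i B; apply: sume_ge0 => y _; exact: piece_ge0.
move=> i; apply: (@ssa_sum _ _ _ _ _ (fun y B => piece Q i y B)).
  by move=> y B; exact: piece_ge0.
move=> y; exact: piece_sigma.
Qed.

HB.instance Definition _ := isMeasure.Build _ _ _ (PQ) Phi0 Phi_ge0 Phi_ssa.

Let Phi_fin : fin_num_fun (PQ).
Proof. by move=> U mU; rewrite /PhiM PhiE. Qed.

HB.instance Definition _ := @Measure_isFinite.Build _ _ _ (PQ) Phi_fin.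
End phiQ.

Lemma Phi_setT (Q : {measure set PS R n -> \bar R}) : Phi Q setT = Q setT.
Proof.
rewrite /Phi.
have h i y : piece Q i y setT =
   \int[Q]_z (((fun z => (alpha T M i y z)%:E) \_ (Eset i y setT)) z).
  by rewrite /piece integral_mkcond.
have mf i y : measurable_fun setT ((fun z => (alpha T M i y z)%:E) \_ (Eset i y setT)).
  by apply/(measurable_restrictT _ (mEset i y measurableT)); exact: malphaE.
have f0 i y z : 0 <= ((fun z => (alpha T M i y z)%:E) \_ (Eset i y setT)) z.
  by rewrite patchE; case: ifPn => // _; rewrite lee_fin; exact: alpha_ge0.
transitivity (\sum_(i : O) \int[Q]_z (\sum_(y < m) ((fun z => (alpha T M i y z)%:E) \_ (Eset i y setT)) z)).
  apply: eq_bigr => i _; rewrite (ge0_integral_sum Q measurableT (mf i) (fun y z _ => f0 i y z)).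
  by apply: eq_bigr => y _; rewrite h.
rewrite -(ge0_integral_sum Q measurableT (f := fun i z => \sum_(y < m) ((fun z => (alpha T M i y z)%:E) \_ (Eset i y setT)) z)); first last.
- by move=> i z _; apply: sume_ge0 => y _; exact: f0.
- move=> i; apply: emeasurable_sum => y; exact: mf.
transitivity (\int[Q]_z (cst 1 z)); last by rewrite integral_cst // mul1e.
apply: eq_integral => z _.
rewrite (bigD1 (g z)) //= [X in _ + X]big1 ?adde0; last first.
  move=> i /eqP gi; apply: big1 => y _; rewrite patchE ifF //.
  by apply/negbTE/negP; rewrite inE => -[[/= ? _] _]; apply: gi.
rewrite /cst -(alpha_sum1 (g z) z) -sumEFin; apply: eq_bigr => y _.
rewrite patchE; case: ifPn => //; rewrite notin_setE /Eset /= => hz.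
have : ~ (0 < alpha T M (g z) y z)%R by move=> a0; apply: hz.
by move/negP; rewrite lt_neqAle alpha_ge0 // andbT negbK => /eqP <-.
Qed.
End phi.


Section finalg.
Context (R : realType).
Local Open Scope ereal_scope.
Lemma fin_swap (a b c d : \bar R) : a \is a fin_num -> b \is a fin_num ->
  c \is a fin_num -> d \is a fin_num -> a - b = c - d -> a + d = c + b.
Proof.
move: a b c d => [a| |] [b| |] [c| |] [d| |] //= _ _ _ _ [] h.
by congr EFin; lra.
Qed.

Lemma fin_swapR (a b c d : \bar R) : a \is a fin_num -> b \is a fin_num ->
  c \is a fin_num -> d \is a fin_num -> a + d = c + b -> (fine a - fine b = fine c - fine d)%R.
Proof.
move: a b c d => [a| |] [b| |] [c| |] [d| |] //= _ _ _ _ [] h; lra.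
Qed.

Lemma fin_add4 (a b c d : \bar R) : a \is a fin_num -> b \is a fin_num ->
  c \is a fin_num -> d \is a fin_num -> (a - b) + (c - d) = (a + c) - (b + d).
Proof.
move: a b c d => [a| |] [b| |] [c| |] [d| |] //= _ _ _ _.
by congr EFin; ring.
Qed.

Lemma fin_scale (r : R) (p q : \bar R) : p \is a fin_num -> q \is a fin_num ->
  r%:E * (p - q) = r%:E * p - r%:E * q.
Proof.
move: p q => [p| |] [q| |] //= _ _.
by rewrite -EFinB -!EFinM -EFinB; congr EFin; ring.
Qed.

Lemma fin_scaleN (r : R) (p q : \bar R) : p \is a fin_num -> q \is a fin_num ->
  r%:E * (p - q) = (- r)%:E * q - (- r)%:E * p.
Proof.
move: p q => [p| |] [q| |] //= _ _.
by rewrite -EFinB -!EFinM -EFinB; congr EFin; ring.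
Qed.
End finalg.

Section main.
Context (R : realType) (n m : nat) (O : finType).
Context (T : 'M[R]_n.+1) (M : O -> 'M[R]_(n.+1, m)) (g : PS R n -> O).
Context (hT : stochastic T) (hM : forall i, stochastic (M i)).
Context (hg : forall i : O, measurable (g @^-1` [set i])).
Local Open Scope ereal_scope.
Local Notation X := (PS R n).

Definition JP (mu : {charge set X -> \bar R}) :=
  jordan_pos (projT2 (cid (projT2 (cid (Hahn_decomposition mu))))).
Definition JN (mu : {charge set X -> \bar R}) :=
  jordan_neg (projT2 (cid (projT2 (cid (Hahn_decomposition mu))))).

Lemma JPN (mu : {charge set X -> \bar R}) (A : set X) : measurable A -> mu A = JP mu A - JN mu A.
Proof.
move=> mA; rewrite [LHS](jordan_decomp (projT2 (cid (projT2 (cid (Hahn_decomposition mu))))) mA).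
rewrite /cadd cscaleN1; congr (_ + _); rewrite /JN /= [LHS]/cscale mulN1e; done.
Qed.

Lemma mfin (Q : {measure set X -> \bar R}) A : Q setT \is a fin_num ->
  measurable A -> Q A \is a fin_num.
Proof.
move=> fQ mA; rewrite ge0_fin_numE //; apply: (le_lt_trans (y := Q setT)).
  by apply: le_measure => //; rewrite inE.
by rewrite -ge0_fin_numE.
Qed.

Lemma pfin (Q : {measure set X -> \bar R}) i y B : Q setT \is a fin_num ->
  measurable B -> piece T M g Q i y B \is a fin_num.
Proof.
move=> fQ mB; have p0 : 0 <= piece T M g Q i y B by exact: piece_ge0.
rewrite ge0_fin_numE //.
by apply: (le_lt_trans (piece_le hT hM hg Q i y mB)); rewrite ltey_eq fQ.
Qed.

Definition cp (mu : {charge set X -> \bar R}) i y (B : set X) : R :=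
  (fine (piece T M g (JP mu) i y B) - fine (piece T M g (JN mu) i y B))%R.

Lemma FopR (mu : {charge set X -> \bar R}) (B : set X) : measurable B ->
  Fop T M g mu B = (\sum_(i : O) \sum_(y < m) cp mu i y B)%:E.
Proof.
move=> mB; rewrite /Fop -sumEFin; apply: eq_bigr => i _.
rewrite -sumEFin; apply: eq_bigr => y _.
rewrite /cp EFinB !fineK //; exact: (piece_fin hT hM hg).
Qed.

Lemma ealpha_ge0 i y (z : X) : 0 <= (alpha T M i y z)%:E.
Proof. by rewrite lee_fin; exact: (alpha_ge0 hT hM). Qed.

Lemma piece_add (Q1 Q2 : {measure set X -> \bar R}) i y B : measurable B ->
  piece T M g (measure_add Q1 Q2) i y B = piece T M g Q1 i y B + piece T M g Q2 i y B.
Proof.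
move=> mB; rewrite /piece ge0_integral_measure_add //.
- exact: (mEset hT hM hg).
- by move=> z _; exact: ealpha_ge0.
- exact: malphaE.
Qed.

Lemma piece_scale (k : {nonneg R}) (Q : {measure set X -> \bar R}) i y B : measurable B ->
  piece T M g (mscale k Q) i y B = k%:num%:E * piece T M g Q i y B.
Proof.
move=> mB; rewrite /piece ge0_integral_mscale //.
- exact: (mEset hT hM hg).
- exact: malphaE.
- by move=> z _; exact: ealpha_ge0.
Qed.

Lemma piece_swap (Q1 Q2 Q3 Q4 : {measure set X -> \bar R}) i y B : measurable B ->
  (forall A, measurable A -> Q1 A + Q2 A = Q3 A + Q4 A) ->
  piece T M g Q1 i y B + piece T M g Q2 i y B = piece T M g Q3 i y B + piece T M g Q4 i y B.
Proof.
move=> mB h; rewrite -!piece_add //; rewrite /piece.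
apply: eq_measure_integral => A mA _.
transitivity (Q1 A + Q2 A); first exact: measure_addE.
transitivity (Q3 A + Q4 A); last by symmetry; exact: measure_addE.
exact: h.
Qed.

Lemma cp_decomp (mu : {charge set X -> \bar R}) (P N : {measure set X -> \bar R}) i y B : measurable B ->
  P setT \is a fin_num -> N setT \is a fin_num ->
  (forall A, measurable A -> mu A = P A - N A) ->
  cp mu i y B = (fine (piece T M g P i y B) - fine (piece T M g N i y B))%R.
Proof.
move=> mB fP fN h; rewrite /cp.
have fJP : JP mu setT \is a fin_num by exact: fin_num_measure.
have fJN : JN mu setT \is a fin_num by exact: fin_num_measure.
apply: fin_swapR; try exact: pfin.
apply: piece_swap => // A mA; apply: fin_swap; try exact: mfin.
by rewrite -JPN // h.
Qed.

Lemma cp_add (mu nu : {charge set X -> \bar R}) i y B : measurable B ->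
  cp (cadd mu nu) i y B = (cp mu i y B + cp nu i y B)%R.
Proof.
move=> mB.
have fin (Q : {finite_measure set X -> \bar R}) A : measurable A -> Q A \is a fin_num.
  by move=> mA; exact: fin_num_measure.
have ma (Q1 Q2 : {measure set X -> \bar R}) A : measure_add Q1 Q2 A = Q1 A + Q2 A.
  exact: measure_addE.
rewrite (@cp_decomp _ (measure_add (JP mu) (JP nu)) (measure_add (JN mu) (JN nu))) //.
- rewrite !piece_add //.
  have f1 : piece T M g (JP mu) i y B \is a fin_num by apply: pfin => //; exact: fin.
  have f2 : piece T M g (JP nu) i y B \is a fin_num by apply: pfin => //; exact: fin.
  have f3 : piece T M g (JN mu) i y B \is a fin_num by apply: pfin => //; exact: fin.
  have f4 : piece T M g (JN nu) i y B \is a fin_num by apply: pfin => //; exact: fin.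
  by rewrite (fineD f1 f2) (fineD f3 f4) /cp opprD addrACA.
- apply: (@eq_ind_r _ _ (fun x => x \is a fin_num) _ _ (measure_addE _ _ _)).
  by rewrite fin_numD !fin.
- apply: (@eq_ind_r _ _ (fun x => x \is a fin_num) _ _ (measure_addE _ _ _)).
  by rewrite fin_numD !fin.
- move=> A mA.
  transitivity (mu A + nu A); first by [].
  apply: (@eq_ind_r _ _ (fun x => _ = x - _) _ _ (measure_addE _ _ _)).
  apply: (@eq_ind_r _ _ (fun x => _ = _ - x) _ _ (measure_addE _ _ _)).
  by rewrite (JPN mu mA) (JPN nu mA) fin_add4 ?fin.
Qed.

Lemma cp_scale (a : R) (mu : {charge set X -> \bar R}) i y B : measurable B ->
  cp (cscale a mu) i y B = (a * cp mu i y B)%R.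
Proof.
move=> mB.
have fin (Q : {finite_measure set X -> \bar R}) A : measurable A -> Q A \is a fin_num.
  by move=> mA; exact: fin_num_measure.
have [a0|a0] := leP 0%R a.
- rewrite (@cp_decomp _ (mscale (NngNum a0) (JP mu)) (mscale (NngNum a0) (JN mu))) //.
  + rewrite !piece_scale // !fineM //; try (apply: pfin => //; exact: fin).
    by rewrite /cp /=; ring.
  + by apply: fin_numM => //; exact: fin.
  + by apply: fin_numM => //; exact: fin.
  + move=> A mA; transitivity (a%:E * mu A); first by [].
    by rewrite (JPN mu mA) fin_scale ?fin.
- have a0' : (0 <= - a)%R by rewrite oppr_ge0 ltW.
  rewrite (@cp_decomp _ (mscale (NngNum a0') (JN mu)) (mscale (NngNum a0') (JP mu))) //.
  + rewrite !piece_scale // !fineM //; try (apply: pfin => //; exact: fin).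
    by rewrite /cp /=; ring.
  + by apply: fin_numM => //; exact: fin.
  + by apply: fin_numM => //; exact: fin.
  + move=> A mA; transitivity (a%:E * mu A); first by [].
    by rewrite (JPN mu mA) fin_scaleN ?fin.
Qed.

Lemma Fop_lin (a b : R) (mu nu : {charge set X -> \bar R}) (B : set X) :
  measurable B ->
  Fop T M g (cadd (cscale a mu) (cscale b nu)) B
  = a%:E * Fop T M g mu B + b%:E * Fop T M g nu B.
Proof.
move=> mB; rewrite !FopR // -!EFinM -EFinD; congr EFin.
rewrite !mulr_sumr -big_split; apply: eq_bigr => i _ /=.
rewrite !mulr_sumr -big_split; apply: eq_bigr => y _ /=.
by rewrite cp_add // !cp_scale.
Qed.
End main.


Lemma absB_le (R : realType) (a b : R) : 0 <= a -> 0 <= b -> `|a - b| <= a + b.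
Proof. by move=> a0 b0; rewrite ler_norml; apply/andP; split; lra. Qed.

Section main2.
Context (R : realType) (n m : nat) (O : finType).
Context (T : 'M[R]_n.+1) (M : O -> 'M[R]_(n.+1, m)) (g : PS R n -> O).
Context (hT : stochastic T) (hM : forall i, stochastic (M i)).
Context (hg : forall i : O, measurable (g @^-1` [set i])).
Local Open Scope ereal_scope.
Local Notation X := (PS R n).

Lemma Fop_charge (mu : {charge set X -> \bar R}) :
  exists nu : {charge set X -> \bar R}, forall B, measurable B -> nu B = Fop T M g mu B.
Proof.
exists (cadd (charge_of_finite_measure (PhiM hT hM hg (JP mu)))
             (cscale (-1) (charge_of_finite_measure (PhiM hT hM hg (JN mu))))).
move=> B mB; rewrite (FopR hT hM hg) //.
transitivity (Phi T M g (JP mu) B + (-1)%:E * Phi T M g (JN mu) B); first by [].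
rewrite !(PhiE hT hM hg) // mulN1e -EFinN -EFinD /cp; congr EFin.
rewrite -sumrN -big_split; apply: eq_bigr => i _ /=.
by rewrite -sumrN -big_split.
Qed.

Definition SR (Q : {measure set X -> \bar R}) B : R :=
  (\sum_(i : O) \sum_(y < m) fine (piece T M g Q i y B))%R.

Lemma SR_ge0 Q B : (0 <= SR Q B)%R.
Proof.
apply: sumr_ge0 => i _; apply: sumr_ge0 => y _; apply: fine_ge0.
exact: piece_ge0.
Qed.

Lemma FopSR (mu : {charge set X -> \bar R}) B : measurable B ->
  Fop T M g mu B = (SR (JP mu) B - SR (JN mu) B)%:E.
Proof.
move=> mB; rewrite (FopR hT hM hg) //; congr EFin; rewrite /SR -sumrB.
by apply: eq_bigr => i _; rewrite -sumrB.
Qed.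

Lemma PhiSR (Q : {finite_measure set X -> \bar R}) B : measurable B ->
  PhiM hT hM hg Q B = (SR Q B)%:E.
Proof. by move=> mB; rewrite /PhiM (PhiE hT hM hg). Qed.

Lemma SR_setT (Q : {finite_measure set X -> \bar R}) : (SR Q setT)%:E = Q setT.
Proof.
transitivity (Phi T M g Q setT); last exact: (Phi_setT hT hM hg).
rewrite /SR /Phi -sumEFin; apply: eq_bigr => i _; rewrite -sumEFin.
apply: eq_bigr => y _; rewrite fineK //; apply: (pfin hT hM hg) => //.
exact: fin_num_measure.
Qed.

Lemma sumPhi (Q : {finite_measure set X -> \bar R}) K (E : nat -> set X) :
  (forall k, measurable (E k)) -> trivIset [set k | (k < K)%N] E ->
  \bigcup_(k in [set k | (k < K)%N]) E k = [set: X] ->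
  \sum_(k < K) PhiM hT hM hg Q (E k) = Q setT.
Proof.
move=> mE tE cE.
rewrite -(@measure_semi_additive_ord_I _ _ _ (PhiM hT hM hg Q) E K) //; last first.
  by rewrite -bigcup_mkord cE.
rewrite -bigcup_mkord cE /PhiM; exact: (Phi_setT hT hM hg).
Qed.

Lemma tv_Fop_le (mu : {charge set X -> \bar R}) :
  tv_norm (Fop T M g mu) <= JP mu setT + JN mu setT.
Proof.
apply: ub_ereal_sup => _ [K [E [mE tE cE ->]]].
apply: (@le_trans _ _ (\sum_(k < K) (PhiM hT hM hg (JP mu) (E k) + PhiM hT hM hg (JN mu) (E k)))).
  apply: lee_sum => k _.
  rewrite (FopSR mu (mE k)) !PhiSR // -EFinD /= lee_fin.
  by apply: absB_le; exact: SR_ge0.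
by rewrite big_split /= !sumPhi.
Qed.

Lemma jordan_tv (mu : {charge set X -> \bar R}) P N (nuPN : hahn_decomposition mu P N) :
  jordan_pos nuPN setT + jordan_neg nuPN setT <= tv_norm mu.
Proof.
move: (nuPN) => [[mP posP] [mN negN] PUN PIN].
have eP : jordan_pos nuPN setT = mu P.
  by rewrite jordan_posE cjordan_posE /crestr0 mem_set //= /crestr setTI.
have eN : jordan_neg nuPN setT = - mu N.
  by rewrite jordan_negE cjordan_negE /crestr0 mem_set //= /crestr setTI.
apply: (@le_trans _ _ (mu P - mu N)); first by rewrite -eP -eN; exact: lexx.
apply: ereal_sup_ubound => /=.
exists 2%N, (fun k => if k == 0%N then P else if k == 1%N then N else set0); split.
- by move=> k; case: ifP => // _; case: ifP.
- apply/trivIsetP => i j /= hi hj ij.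
  case: i hi ij => [|[|i]] // _; case: j hj => [|[|j]] //= _ _; by rewrite setIC.
- apply/seteqP; split => // x _.
  have : (P `|` N) x by rewrite PUN.
  by case => h; [exists 0%N | exists 1%N].
- rewrite big_ord_recr big_ord_recr big_ord0 /= add0e.
  rewrite gee0_abs; last exact: posP.
  by rewrite lee0_abs //; exact: negN.
Qed.

Lemma Fop_setT (mu : {charge set X -> \bar R}) : Fop T M g mu setT = mu setT.
Proof.
by rewrite (FopSR mu measurableT) (JPN mu measurableT) EFinB !SR_setT.
Qed.

Lemma tv_dirac (z0 : X) : tv_norm (charge_of_finite_measure (@dirac _ _ z0 R)) <= 1.
Proof.
apply: ub_ereal_sup => _ [K [E [mE tE cE ->]]].
rewrite (eq_bigr (fun k : 'I_K => @dirac _ _ z0 R (E k))); last by move=> k _; rewrite gee0_abs.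
rewrite -(@measure_semi_additive_ord_I _ _ _ (@dirac _ _ z0 R) E K) //; last first.
  by rewrite -bigcup_mkord cE.
by rewrite -bigcup_mkord cE; apply: (@eq_ind_r _ _ (fun x => x <= 1) _ _ (diracT R z0)).
Qed.
End main2.


Theorem lemma2p23 (R : realType) (n m : nat) (O : finType)
  (T : 'M[R]_n.+1) (M : O -> 'M[R]_(n.+1, m)) (g : PS R n -> O) :
  stochastic T -> (forall i, stochastic (M i)) ->
  (forall i : O, measurable (g @^-1` [set i])) ->
  [/\
   (* F maps M(P(S)) into M(P(S)) *)
   (forall mu : {charge set PS R n -> \bar R},
      exists nu : {charge set PS R n -> \bar R},
        forall B, measurable B -> nu B = Fop T M g mu B),
   (* F is linear *)
   (forall (a b : R) (mu nu : {charge set PS R n -> \bar R}) (B : set (PS R n)),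
      measurable B ->
      Fop T M g (cadd (cscale a mu) (cscale b nu)) B
      = (a%:E * Fop T M g mu B + b%:E * Fop T M g nu B)%E) &
   (* operator norm w.r.t. the total variation norm equals 1 *)
   ereal_sup [set tv_norm (Fop T M g mu) |
                mu in [set mu : {charge set PS R n -> \bar R} |
                        (tv_norm mu <= 1)%E]] = 1%E].
Proof.
move=> hT hM hg; split.
- exact: (Fop_charge hT hM hg).
- by move=> a b mu nu B mB; exact: (Fop_lin hT hM hg).
apply/eqP; rewrite eq_le; apply/andP; split.
  apply: ub_ereal_sup => _ [mu hmu <-].
  apply: (le_trans (tv_Fop_le hT hM hg mu)).
  exact: (le_trans (jordan_tv _) hmu).
pose mu0 := charge_of_finite_measure (@dirac _ _ (point : PS R n) R).
apply: (@le_trans _ _ (tv_norm (Fop T M g mu0))); last first.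
  by apply: ereal_sup_ubound; exists mu0 => //; exact: tv_dirac.
apply: ereal_sup_ubound; exists 1%N, (fun _ => setT); split => //.
- apply/trivIsetP => i j /= hi hj ij.
  by case: i hi ij => // _; case: j hj.
- by apply/seteqP; split => // x _; exists 0%N.
rewrite big_ord1 (Fop_setT hT hM hg).
apply: (@eq_ind_r _ _ (fun x => 1%E = `|x|%E) _ _ (diracT R (point : PS R n))).
by rewrite /= normr1.
Qed.
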